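(* Let $X_1,\dots,X_n$ be real random variables with $\mathbb{E}|X_i|<\infty$, let $N,M$ be positive integers with $n\le M$, let $L\ge 0$, $\delta>0$, $K>0$, and set $A=1+LM/N$. Assume that for all $1\le i<\ell\le n$, almost surely $|\mathbb{E}_i(X_\ell)-\mathbb{E}_{i-1}(X_\ell\mid X_i=0)|\le L|X_i|/N$, and that for all $1\le i\le n$, $\mathbb{E}(e^{\delta A|X_i|}\mid\mathcal F_{i-1})\le K$ almost surely. Define the Doob martingale differences \[ d_i=\mathbb{E}_i(X_i+\cdots+X_n)-\mathbb{E}_{i-1}(X_i+\cdots+X_n),\qquad i=1,\dots,n. \] Then for every $i$, $\mathbb{E}_{i-1}(d_i)=0$, $S_n-\mathbb{E}S_n=\sum_{i=1}^n d_i$, and almost surely $\mathbb{E}_{i-1}\big(e^{\delta|d_i|}\big)\le K^2$.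
   Context: $\mathcal F_i=\sigma(X_1,\dots,X_i)$ with $\mathcal F_0$ trivial, $\mathbb{E}_i(\cdot)=\mathbb{E}(\cdot\mid\mathcal F_i)$, and $S_n=X_1+\cdots+X_n$. For $i<\ell$, writing $\mathbb{E}_i(X_\ell)=h_{i,\ell}(X_1,\dots,X_i)$ with $h_{i,\ell}$ measurable, $\mathbb{E}_{i-1}(X_\ell\mid X_i=0):=h_{i,\ell}(X_1,\dots,X_{i-1},0)$. *)

(* Defs.v *)
From HB Require Import structures.
From mathcomp Require Import all_boot all_order all_algebra.
From mathcomp Require Import all_classical all_reals all_analysis.
Set Implicit Arguments. Unset Strict Implicit. Unset Printing Implicit Defensive.
Import Order.TTheory GRing.Theory Num.Theory.
Local Open Scope classical_set_scope.
Local Open Scope ring_scope.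

Section defs.
Context {d : measure_display} {T : measurableType d} {R : realType}.

(* F_i = sigma(X_1, ..., X_i); F_0 is the trivial sigma-algebra {set0, setT}.
   Random variables are indexed from 1: X 1, ..., X n. *)
Definition Fsig (X : nat -> T -> R) (i : nat) : set (set T) :=
  g_sigma_preimage (fun j : 'I_i => X j.+1).

Definition F_measurable (F : set (set T)) (Y : T -> R) : Prop :=
  forall B : set R, measurable B -> F (Y @^-1` B).

Definition is_cond_exp (P : probability T R) (F : set (set T)) (Z Y : T -> R)
  : Prop :=
  [/\ F_measurable F Y,
      P.-integrable setT (EFin \o Y),
      P.-integrable setT (EFin \o Z) &
      forall A, F A ->
        (\int[P]_(x in A) (Y x)%:E = \int[P]_(x in A) (Z x)%:E)%E].

Definition vecX (X : nat -> T -> R) (i : nat) (w : T) : i.-tuple R :=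
  [tuple X j.+1 w | j < i].

Definition vecX0 (X : nat -> T -> R) (i : nat) (w : T) : i.-tuple R :=
  [tuple (if val j == i.-1 then 0 else X j.+1 w) | j < i].

Definition tailsum (X : nat -> T -> R) (i n : nat) (w : T) : R :=
  \sum_(i <= l < n.+1) X l w.

End defs.

(* Main.v *)
Require Import Defs.
From HB Require Import structures.
From mathcomp Require Import all_boot all_order all_algebra.
From mathcomp Require Import all_classical all_reals all_analysis.
From mathcomp Require Import measurable_realfun.
From mathcomp Require Import ring lra.
Set Implicit Arguments. Unset Strict Implicit. Unset Printing Implicit Defensive.
Import Order.TTheory GRing.Theory Num.Theory.
Import numFieldNormedType.Exports.
Local Open Scope classical_set_scope.
Local Open Scope ring_scope.

Section helpers.
Context {d : measure_display} {T : measurableType d} {R : realType}.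
Variable X : nat -> T -> R.

Definition Gen (i : nat) : set (set T) :=
  \big[setU/set0]_(j < i) preimage_set_system setT (X j.+1) measurable.
Definition Tf (i : nat) := g_sigma_algebraType (Gen i).

Lemma TfE i (A : set T) : @measurable _ (Tf i) A = Fsig X i A.
Proof. by []. Qed.

Lemma FmP i (f : T -> R) :
  F_measurable (Fsig X i) f <-> measurable_fun (setT : set (Tf i)) f.
Proof.
split=> [h _ B mB|h B mB]; first by rewrite setTI; exact: h.
by have := h measurableT B mB; rewrite setTI.
Qed.

Lemma Gen_meas i j : (j < i)%N -> measurable_fun (setT : set (Tf i)) (X j.+1).
Proof.
move=> ji _ B mB; apply: sub_sigma_algebra.
case: i ji => // i ji.
rewrite /Gen -bigcup_mkord_ord; exists j => //.
by exists B => //; rewrite inordK.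
Qed.

Lemma Fsub i : (forall j, (1 <= j <= i)%N -> measurable_fun setT (X j)) ->
  Fsig X i `<=` measurable.
Proof.
move=> mX; apply: smallest_sub; first exact: sigma_algebra_measurable.
rewrite /Gen; elim/big_ind: _ => //.
- by move=> A B HA HB C [/HA|/HB].
- move=> j _ C [B mB <-]; rewrite setTI.
  by have := mX j.+1 (ltn_ord j) measurableT B mB; rewrite setTI.
Qed.

Lemma Fmono i j : (i <= j)%N -> Fsig X i `<=` Fsig X j.
Proof.
move=> ij; apply: smallest_sub; first exact: smallest_sigma_algebra.
rewrite /Gen; elim/big_ind: _ => //.
- by move=> A B HA HB C [/HA|/HB].
- move=> k _ C [B mB <-]; rewrite setTI.
  have := @Gen_meas j k (leq_trans (ltn_ord k) ij) measurableT B mB.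
  by rewrite setTI.
Qed.

Lemma F0 A : Fsig X 0 A -> A = set0 \/ A = setT.
Proof.
have : sigma_algebra setT [set B : set T | B = set0 \/ B = setT].
  split.
  - by left.
  - by move=> B [->|->]; [right; rewrite setD0|left; rewrite setDv].
  - move=> F HF; have [[k Fk]|] := pselect (exists k, F k = setT).
      right; apply/seteqP; split => // x _; exists k => //; by rewrite Fk.
    move=> HF'; left; apply/seteqP; split => // x [k _].
    by case: (HF k) => Fk; [rewrite Fk|case: HF'; exists k].
move=> sA FA; apply: (smallest_sub sA _ FA).
by rewrite /Gen big_ord0.
Qed.

Lemma Tf_meas i (f : T -> R) :
  (forall j, (1 <= j <= i)%N -> measurable_fun setT (X j)) ->
  measurable_fun (setT : set (Tf i)) f -> measurable_fun setT f.
Proof.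
move=> mX mf _ B mB; exact: (Fsub mX (mf measurableT B mB)).
Qed.

Lemma Fsig_gt i (f : T -> R) c : measurable_fun (setT : set (Tf i)) f ->
  Fsig X i [set x | c < f x].
Proof.
move=> mf; have := mf measurableT `]c, +oo[%classic (measurable_itv _).
rewrite setTI; congr (Fsig X i _); apply/seteqP; split => x /=;
  by rewrite in_itv /= andbT.
Qed.

End helpers.

Section integ.
Context {d : measure_display} {T : measurableType d} {R : realType}.
Variable P : probability T R.
Local Notation RI B f := (Rintegral P B f).

Lemma intB D (f g : T -> R) : measurable D ->
  P.-integrable D (EFin \o f) -> P.-integrable D (EFin \o g) ->
  P.-integrable D (EFin \o (fun x => f x - g x)).
Proof.
move=> mD If Ig; apply: (eq_integrable mD _ _ _ (integrableB mD If Ig)).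
by move=> x _.
Qed.

Lemma intD D (f g : T -> R) : measurable D ->
  P.-integrable D (EFin \o f) -> P.-integrable D (EFin \o g) ->
  P.-integrable D (EFin \o (fun x => f x + g x)).
Proof.
move=> mD If Ig; apply: (eq_integrable mD _ _ _ (integrableD mD If Ig)).
by move=> x _.
Qed.

Lemma intZ D (f : T -> R) (k : R) : measurable D ->
  P.-integrable D (EFin \o f) -> P.-integrable D (EFin \o (fun x => k * f x)).
Proof.
move=> mD If; apply: (eq_integrable mD _ _ _ (integrableZl mD k If)).
by move=> x _.
Qed.

Lemma intC D (k : R) : measurable D -> P.-integrable D (EFin \o (fun _ : T => k)).
Proof. by move=> mD; exact: finite_measure_integrable_cst. Qed.

Lemma intS D (F : nat -> T -> R) a b : measurable D ->
  (forall l, (a <= l < b)%N -> P.-integrable D (EFin \o F l)) ->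
  P.-integrable D (EFin \o (fun x => \sum_(a <= l < b) F l x)).
Proof.
move=> mD IF; elim: b IF => [|b IH] IF.
  by apply: (eq_integrable mD _ _ _ (intC 0 mD)) => x _ /=; rewrite big_geq.
case: (leqP a b) => ab.
  apply: (eq_integrable mD (EFin \o (fun x => \sum_(a <= l < b) F l x + F b x))).
    by move=> x _ /=; rewrite big_nat_recr.
  apply: intD => //; first by apply: IH => l /andP[al lb]; apply: IF; rewrite al ltnS ltnW.
  by apply: IF; apply/andP; split.
apply: (eq_integrable mD (EFin \o (fun _ => 0))); last exact: intC.
by move=> x _ /=; rewrite big_geq.
Qed.

Lemma RIS D (F : nat -> T -> R) a b : measurable D ->
  (forall l, (a <= l < b)%N -> P.-integrable D (EFin \o F l)) ->
  RI D (fun x => \sum_(a <= l < b) F l x) = \sum_(a <= l < b) RI D (F l).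
Proof.
move=> mD IF; elim: b IF => [|b IH] IF.
  rewrite (@eq_Rintegral _ _ _ P D (fun _ => 0)); last first.
    by move=> x _; rewrite big_geq.
  by rewrite big_geq // Rintegral_cst // mul0r.
case: (leqP a b) => ab.
  rewrite big_nat_recr //= -IH; last by move=> l /andP[al lb]; apply: IF; rewrite al ltnS ltnW.
  rewrite -RintegralD //.
  - by apply: eq_Rintegral => x _; rewrite big_nat_recr.
  - by apply: intS => // l /andP[al lb]; apply: IF; rewrite al ltnS ltnW.
  - by apply: IF; apply/andP; split.
rewrite (@eq_Rintegral _ _ _ P D (fun _ => 0)); last first.
  by move=> x _; rewrite big_geq.
by rewrite big_geq // Rintegral_cst // mul0r.
Qed.

Lemma ae_le_RI B (f g : T -> R) : measurable B ->
  P.-integrable B (EFin \o f) -> P.-integrable B (EFin \o g) ->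
  {ae P, forall x, f x <= g x} -> RI B f <= RI B g.
Proof.
move=> mB If Ig fg; rewrite -subr_ge0 -RintegralB//.
have mf : measurable_fun B f by apply/measurable_EFinP; exact: measurable_int If.
have mg : measurable_fun B g by apply/measurable_EFinP; exact: measurable_int Ig.
rewrite /Rintegral.
rewrite (@ae_eq_integral _ _ _ P B (fun x => (Num.max (g x - f x) 0)%:E)) //.
- by apply: fine_ge0; apply: integral_ge0 => x _; rewrite lee_fin le_max lexx orbT.
- by apply/measurable_EFinP; apply: measurable_funB.
- by apply/measurable_EFinP; apply: measurable_maxr => //; apply: measurable_funB.
- apply: filterS fg => x fgx _; congr EFin.
  by rewrite max_l // subr_ge0.
Qed.

Lemma ae_integrable (f g : T -> R) : measurable_fun setT f ->
  {ae P, forall x, `|f x| <= g x} -> P.-integrable setT (EFin \o g) ->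
  P.-integrable setT (EFin \o f).
Proof.
move=> mf fg Ig; apply/integrableP; split; first exact/measurable_EFinP.
case/integrableP: Ig => mg; apply: le_lt_trans.
apply: ae_ge0_le_integral => //.
- by apply: measurableT_comp => //; exact/measurable_EFinP.
- by apply: measurableT_comp => //.
- apply: filterS fg => x fgx _ /=; rewrite !lee_fin.
  by apply: (le_trans fgx); exact: ler_norm.
Qed.

Lemma ae_le0 (G : set (set T)) (f : T -> R) :
  (forall c : R, G [set x | c < f x]) -> G `<=` measurable ->
  P.-integrable setT (EFin \o f) ->
  (forall B, G B -> RI B f <= 0) -> {ae P, forall x, f x <= 0}.
Proof.
move=> Gf Gm If H.
pose Bk (k : nat) := [set x | k.+1%:R^-1 < f x].
have mBk k : measurable (Bk k) by exact: Gm _ (Gf _).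
have P0 k : P (Bk k) = 0%E.
  have IB : P.-integrable (Bk k) (EFin \o f) by exact: integrableS If.
  have IC : P.-integrable (Bk k) (EFin \o cst (k.+1%:R^-1 : R)).
    exact: finite_measure_integrable_cst.
  have := le_Rintegral (mBk k) IC IB (fun x (Bx : Bk k x) => ltW Bx).
  rewrite Rintegral_cst // => le1.
  have := le_trans le1 (H _ (Gf _)).
  rewrite pmulr_rle0 ?invr_gt0 // => le2.
  apply/eqP; rewrite -measure_le0.
  have fP : P (Bk k) \is a fin_num.
    by rewrite ge0_fin_numE // (le_lt_trans (probability_le1 _ _)) // ltry.
  by move: le2; rewrite -lee_fin fineK.
have nB k : P.-negligible (Bk k) by exists (Bk k); split.
apply: (negligibleS _ (negligible_bigcup nB)).
  move=> x /= /negP; rewrite -ltNge => fx0.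
  have [k hk] := ltr_add_invr fx0.
  by exists k => //; rewrite /Bk /= -[_^-1]add0r.
Qed.

End integ.

Section ce.
Context {d : measure_display} {T : measurableType d} {R : realType}.
Variable P : probability T R.
Variable X : nat -> T -> R.
Local Notation RI B f := (Rintegral P B f).

Lemma le_ce i (f g : T -> R) :
  (forall j, (1 <= j <= i)%N -> measurable_fun setT (X j)) ->
  measurable_fun (setT : set (Tf X i)) f -> measurable_fun (setT : set (Tf X i)) g ->
  P.-integrable setT (EFin \o f) -> P.-integrable setT (EFin \o g) ->
  (forall B, Fsig X i B -> RI B f <= RI B g) -> {ae P, forall x, f x <= g x}.
Proof.
move=> mX mf mg If Ig H.
have mfg : measurable_fun (setT : set (Tf X i)) (f \- g) by exact: measurable_funB.
have Ifg : P.-integrable setT (EFin \o (f \- g)) by exact: intB.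
have Hn : forall B, Fsig X i B -> RI B (f \- g) <= 0.
  move=> B FB; rewrite /= RintegralB ?subr_le0 ?H //.
  - exact: Fsub mX _ FB.
  - by apply: integrableS If => //; exact: Fsub mX _ FB.
  - by apply: integrableS Ig => //; exact: Fsub mX _ FB.
have := @ae_le0 _ _ _ P (Fsig X i) (f \- g) (fun c => Fsig_gt c mfg) (Fsub mX) Ifg Hn.
by apply: filterS => x /=; rewrite subr_le0.
Qed.

Lemma eq_ce i (f g : T -> R) :
  (forall j, (1 <= j <= i)%N -> measurable_fun setT (X j)) ->
  measurable_fun (setT : set (Tf X i)) f -> measurable_fun (setT : set (Tf X i)) g ->
  P.-integrable setT (EFin \o f) -> P.-integrable setT (EFin \o g) ->
  (forall B, Fsig X i B -> (\int[P]_(x in B) (f x)%:E = \int[P]_(x in B) (g x)%:E)%E) ->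
  {ae P, forall x, f x = g x}.
Proof.
move=> mX mf mg If Ig H.
have H' : forall B, Fsig X i B -> RI B f = RI B g.
  by move=> B FB; rewrite /Rintegral H.
have H1 : {ae P, forall x, f x <= g x}.
  by apply: (le_ce mX) => // B FB; rewrite H'.
have H2 : {ae P, forall x, g x <= f x}.
  by apply: (le_ce mX) => // B FB; rewrite H'.
by apply: filterS2 H1 H2 => x a b; apply/eqP; rewrite eq_le a b.
Qed.

End ce.

Section main.
Context {d : measure_display} {T : measurableType d} {R : realType}.
Variable P : probability T R.
Local Notation RI B f := (Rintegral P B f).

Lemma RIE D (f : T -> R) : measurable D -> P.-integrable D (EFin \o f) ->
  (\int[P]_(x in D) (f x)%:E)%E = (RI D f)%:E.
Proof. by move=> mD If; rewrite /Rintegral fineK // integrable_fin_num. Qed.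

Lemma ae_big (Q : nat -> T -> Prop) a b :
  (forall l, (a <= l < b)%N -> {ae P, forall x, Q l x}) ->
  {ae P, forall x, forall l, (a <= l < b)%N -> Q l x}.
Proof.
elim: b => [|b IH] H.
  by apply: aeW => x l /andP[_]; rewrite ltn0.
have H1 : {ae P, forall x, forall l, (a <= l < b)%N -> Q l x}.
  by apply: IH => l /andP[al lb]; apply: H; rewrite al ltnS ltnW.
case: (leqP a b) => ab; last first.
  by apply: aeW => x l /andP[al lb]; move: (leq_ltn_trans al lb); rewrite ltnS leqNgt ab.
have H2 := H b (andb_true_intro (conj ab (ltnSn b))).
apply: filterS2 H1 H2 => x h1 h2 l /andP[al]; rewrite ltnS leq_eqVlt => /orP[/eqP->//|lb].
by apply: h1; rewrite al lb.
Qed.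

Variables (X : nat -> T -> R) (n : nat) (U V : nat -> T -> R).
Hypothesis mX : forall i, (1 <= i <= n)%N -> measurable_fun setT (X i).
Hypothesis IX : forall i, (1 <= i <= n)%N -> P.-integrable setT (EFin \o X i).
Hypothesis HU : forall i, (1 <= i <= n)%N ->
  is_cond_exp P (Fsig X i) (tailsum X i n) (U i).
Hypothesis HV : forall i, (1 <= i <= n)%N ->
  is_cond_exp P (Fsig X i.-1) (tailsum X i n) (V i).

Lemma mXle i : (i <= n)%N -> forall j, (1 <= j <= i)%N -> measurable_fun setT (X j).
Proof. by move=> i_n j /andP[j1 ji]; apply: mX; rewrite j1 (leq_trans ji). Qed.

Lemma FsubT i (B : set T) : (i <= n)%N -> Fsig X i B -> measurable B.
Proof. by move=> i_n; apply: Fsub; exact: mXle. Qed.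

Lemma part1 i : (1 <= i <= n)%N ->
  is_cond_exp P (Fsig X i.-1) (fun w => U i w - V i w) (fun _ => 0).
Proof.
move=> /[dup] iH /andP[i1 i_n].
have [mU IU It HUi] := HU iH.
have [mV IV _ HVi] := HV iH.
split.
- by apply/FmP; exact: measurable_cst.
- exact: intC.
- exact: (intB measurableT IU IV).
move=> A FA.
have FAi : Fsig X i A by apply: (Fmono (leq_pred i)).
have mA : measurable A by apply: (FsubT i_n).
rewrite (RIE mA (intC _ 0 mA)) (RIE mA (intB mA _ _)); last 2 first.
- exact: integrableS IU.
- exact: integrableS IV.
rewrite Rintegral_cst // mul0r RintegralB //; last 2 first.
- exact: integrableS IU.
- exact: integrableS IV.
rewrite /Rintegral HUi // HVi // subrr //.
Qed.

Lemma tele (x u v : nat -> R) (c : R) : (0 < n)%N ->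
  (forall i, (1 <= i < n)%N -> u i = x i + v i.+1) -> u n = x n -> v 1%N = c ->
  \sum_(1 <= i < n.+1) x i - c = \sum_(1 <= i < n.+1) (u i - v i).
Proof.
move=> n0 Hu Hn Hv.
pose v' j := if (j <= n)%N then v j else 0.
rewrite [RHS](eq_big_nat _ _ (F2 := fun i => x i + (v' i.+1 - v' i))); last first.
  move=> i /andP[i1]; rewrite ltnS leq_eqVlt => /orP[/eqP->|ilt].
    by rewrite Hn /v' ltnn leqnn sub0r.
  by rewrite Hu ?i1 // /v' ilt ltnW // addrA.
rewrite big_split /= telescope_sumr // /v' ltnn n0.
by rewrite sub0r Hv.
Qed.

Lemma tailsumS i : (i <= n)%N -> forall w,
  tailsum X i n w = X i w + tailsum X i.+1 n w.
Proof. by move=> i_n w; rewrite /tailsum big_ltn. Qed.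

Lemma intTS i : (1 <= i)%N -> P.-integrable setT (EFin \o tailsum X i n).
Proof.
move=> i1; apply: intS => // l /andP[il ln]; apply: IX.
by rewrite (leq_trans i1 il) -ltnS.
Qed.

Lemma X_meas i : (1 <= i)%N -> measurable_fun (setT : set (Tf X i)) (X i).
Proof. by move=> i1; rewrite -(prednK i1); apply: Gen_meas; rewrite prednK. Qed.

Lemma stepU i : (1 <= i < n)%N -> {ae P, forall w, U i w = X i w + V i.+1 w}.
Proof.
move=> /andP[i1 ilt].
have iH : (1 <= i <= n)%N by rewrite i1 ltnW.
have iH1 : (1 <= i.+1 <= n)%N by rewrite ilt.
have [mU IU It HUi] := HU iH.
have [mV IV It1 HVi] := HV iH1.
apply: (eq_ce (i := i) (mXle (ltnW ilt))).
- exact/FmP.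
- apply: measurable_funD; first exact: X_meas.
  exact/FmP.
- exact: IU.
- exact: (intD measurableT (IX iH) IV).
move=> B FB; have mB : measurable B by apply: (FsubT (ltnW ilt)).
rewrite HUi // (RIE mB (intD mB _ _)); last 2 first.
- exact: integrableS (IX iH).
- exact: integrableS IV.
rewrite RintegralD //; last 2 first.
- exact: integrableS (IX iH).
- exact: integrableS IV.
rewrite /Rintegral HVi //.
rewrite -/(Rintegral P B (X i)) -/(Rintegral P B (tailsum X i.+1 n)).
rewrite -RintegralD //; last 2 first.
- exact: integrableS (IX iH).
- exact: integrableS It1.
rewrite -RIE //; last first.
  apply: intD => //; [exact: integrableS (IX iH)|exact: integrableS It1].
by apply: eq_integral => x _; rewrite tailsumS // ltnW.
Qed.

Lemma stepUn : (0 < n)%N -> {ae P, forall w, U n w = X n w}.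
Proof.
move=> n0; have iH : (1 <= n <= n)%N by rewrite n0 leqnn.
have [mU IU It HUi] := HU iH.
apply: (eq_ce (i := n) (mXle (leqnn n))).
- exact/FmP.
- exact: X_meas.
- exact: IU.
- exact: IX.
move=> B FB; rewrite HUi //.
by apply: eq_integral => x _; rewrite /tailsum big_nat1.
Qed.

Lemma stepV1 : (0 < n)%N ->
  {ae P, forall w, V 1%N w = fine ('E_P[fun x => \sum_(1 <= i < n.+1) X i x])}.
Proof.
move=> n0; have iH : (1 <= 1 <= n)%N by rewrite n0.
have [mV IV It HVi] := HV iH.
apply: (eq_ce (i := 0) (mXle (leq0n n))).
- exact/FmP.
- exact: measurable_cst.
- exact: IV.
- exact: intC.
move=> B /[dup] FB /F0 [->|->].
  by rewrite !integral_set0.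
rewrite HVi; last exact: (@measurableT _ (Tf X 0)).
have -> : forall c : R, (\int[P]_(x in setT) (c%:E) = c%:E)%E.
  move=> c; have := integral_cst P (@measurableT _ T) c%:E.
  by rewrite /cst /= => ->; rewrite (@probability_setT _ _ _ P) mule1.
have fin : ('E_P[fun x => (\sum_(1 <= i < n.+1) X i x)%R])%E \is a fin_num.
  rewrite unlock; apply: integrable_fin_num => //.
by rewrite fineK // unlock.
Qed.

Lemma part2 : {ae P, forall w, \sum_(1 <= i < n.+1) X i w
    - fine ('E_P[fun x => \sum_(1 <= i < n.+1) X i x])
    = \sum_(1 <= i < n.+1) (U i w - V i w)}.
Proof.
case: (posnP n) => [n0|n0].
  apply: aeW => w; subst n; rewrite !big_geq // unlock integral0_eq /= ?subr0 //.
  by move=> x _; rewrite big_geq.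
have H1 := ae_big (Q := fun l w => U l w = X l w + V l.+1 w) (a := 1) (b := n)
  (fun l hl => stepU hl).
have H2 := stepUn n0.
have H3 := stepV1 n0.
have H23 : {ae P, forall w, U n w = X n w /\ V 1%N w = fine ('E_P[fun x => (\sum_(1 <= i < n.+1) X i x)%R])%E}.
  by apply: filterS2 H2 H3 => w a b; split.
apply: filterS2 H1 H23 => w h1 [h2 h3].
by apply: tele.
Qed.

End main.

Section jen.
Context {d : measure_display} {T : measurableType d} {R : realType}.
Variable P : probability T R.
Variable X : nat -> T -> R.
Local Notation RI B f := (Rintegral P B f).

Lemma ae_nat (Q : nat -> T -> Prop) :
  (forall k, {ae P, forall x, Q k x}) -> {ae P, forall x, forall k, Q k x}.
Proof.
move=> H; apply: (negligibleS _ (negligible_bigcup H)).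
by move=> x /= /existsNP [k nk]; exists k.
Qed.

Lemma Pfin (B : set T) : measurable B -> P B \is a fin_num.
Proof. by move=> mB; rewrite ge0_fin_numE // (le_lt_trans (probability_le1 _ _)) // ltry. Qed.

Lemma one_side j (W Z G Y : T -> R) (delta K : R) :
  (forall l, (1 <= l <= j)%N -> measurable_fun setT (X l)) ->
  0 < delta -> 0 < K ->
  measurable_fun (setT : set (Tf X j)) W ->
  P.-integrable setT (EFin \o W) -> P.-integrable setT (EFin \o Z) ->
  P.-integrable setT (EFin \o Y) ->
  P.-integrable setT (EFin \o (fun x => expR (delta * G x))) ->
  {ae P, forall x, Z x <= G x} ->
  (forall B, Fsig X j B -> RI B W = RI B Z) ->
  (forall B, Fsig X j B -> RI B Y = RI B (fun x => expR (delta * G x))) ->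
  {ae P, forall x, Y x <= K} ->
  {ae P, forall x, W x <= ln K / delta}.
Proof.
move=> mX d0 K0 mW IW IZ IY IE hZG hWZ hYE hYK.
pose c0 := ln K / delta.
have key k : {ae P, forall x, W x <= c0 + k.+1%:R^-1}.
  set c := c0 + k.+1%:R^-1.
  pose B := [set x | c < W x].
  have FB : Fsig X j B by exact: Fsig_gt.
  have mB : measurable B by exact: Fsub mX _ FB.
  set e := expR (delta * c).
  have eK : K < e.
    rewrite /e -[X in X < _](lnK (x := K)) ?posrE // ltr_expR /c mulrDr /c0.
    by rewrite mulrC divfK ?gt_eqF // ltrDl mulr_gt0 // invr_gt0.
  pose p := fine (P B).
  have p0 : 0 <= p by apply: fine_ge0.
  have IS f : P.-integrable setT (EFin \o f) -> P.-integrable B (EFin \o f).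
    by move=> If; apply: integrableS If.
  have RC r : RI B (fun _ => r) = r * p by rewrite Rintegral_cst.
  have h1 : RI B Y <= K * p.
    rewrite -RC; apply: ae_le_RI => //; [exact: IS|exact: intC].
  have h2 : e * p + (e * delta) * (RI B W - c * p) <= RI B Y.
    rewrite hYE // hWZ // -(RC c) -RintegralB //; [|exact: IS|exact: intC].
    rewrite -RintegralZl //; last by apply: intB => //; [exact: IS|exact: intC].
    rewrite -(RC e) -RintegralD //; last 2 first.
    - exact: intC.
    - by apply: intZ => //; apply: intB => //; [exact: IS|exact: intC].
    - apply: ae_le_RI => //.
      + apply: intD => //; first exact: intC.
        by apply: intZ => //; apply: intB => //; [exact: IS|exact: intC].
      + exact: IS.
      apply: filterS hZG => x hx.
      have := expR_ge1Dx (delta * (Z x - c)).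
      rewrite -(ler_pM2l (expR_gt0 (delta * c))) -expRD => h.
      apply: (le_trans (le_trans _ h)); last first.
        by rewrite ler_expR mulrBr addrC subrK ler_pM2l.
      by rewrite -/e [leRHS]mulrDr mulr1 mulrA.
  have h3 : c * p <= RI B W.
    rewrite -RC; apply: le_Rintegral => //; [exact: intC|exact: IS|].
    by move=> x Bx; apply: ltW.
  have h4 : e * p <= K * p.
    apply: le_trans h1; apply: le_trans h2; rewrite lerDl.
    by apply: mulr_ge0; [apply: mulr_ge0; [exact: ltW (expR_gt0 _)|exact: ltW]|rewrite subr_ge0].
  have pz : p = 0.
    apply/eqP; rewrite eq_le p0 andbT; apply: contraTT h4; rewrite -ltNge => pp.
    by rewrite -ltNge ltr_pM2r.
  have PB : P B = 0%E by rewrite -(fineK (Pfin mB)) -/p pz.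
  exists B; split => // x /= /negP; rewrite -ltNge => hx; exact: hx.
have := ae_nat key; apply: filterS => x hx.
rewrite leNgt; apply/negP => hc.
have [k hk] := ltr_add_invr hc.
by have := hx k; rewrite leNgt hk.
Qed.

Lemma two_side j (W Z G Y : T -> R) (delta K : R) :
  (forall l, (1 <= l <= j)%N -> measurable_fun setT (X l)) ->
  0 < delta -> 0 < K ->
  measurable_fun (setT : set (Tf X j)) W ->
  P.-integrable setT (EFin \o W) -> P.-integrable setT (EFin \o Z) ->
  P.-integrable setT (EFin \o Y) ->
  P.-integrable setT (EFin \o (fun x => expR (delta * G x))) ->
  {ae P, forall x, `|Z x| <= G x} ->
  (forall B, Fsig X j B -> RI B W = RI B Z) ->
  (forall B, Fsig X j B -> RI B Y = RI B (fun x => expR (delta * G x))) ->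
  {ae P, forall x, Y x <= K} ->
  {ae P, forall x, expR (delta * `|W x|) <= K}.
Proof.
move=> mX d0 K0 mW IW IZ IY IE hZG hWZ hYE hYK.
have h1 : {ae P, forall x, W x <= ln K / delta}.
  apply: (@one_side j W Z G Y delta K) => //.
  by apply: filterS hZG => x h; exact: le_trans (ler_norm _) h.
have mW' : measurable_fun (setT : set (Tf X j)) (fun x => -1 * W x).
  by apply: measurable_funM => //; exact: measurable_cst.
have h2 : {ae P, forall x, -1 * W x <= ln K / delta}.
  apply: (@one_side j (fun x => -1 * W x) (fun x => -1 * Z x) G Y delta K) => //.
  - exact: intZ.
  - exact: intZ.
  - apply: filterS hZG => x h; apply: le_trans h.
    by rewrite mulN1r -normrN ler_norm.
  - move=> B FB; rewrite !RintegralZl ?hWZ //; try exact: Fsub mX _ FB.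
    + by apply: integrableS IZ => //; exact: Fsub mX _ FB.
    + by apply: integrableS IW => //; exact: Fsub mX _ FB.
apply: filterS2 h1 h2 => x a b.
rewrite -[K](lnK (x := K)) ?posrE // ler_expR -ler_pdivlMl //.
rewrite mulrC; case: (ler0P (W x)) => hw.
  by rewrite -mulN1r.
by [].
Qed.

End jen.


Section vec.
Context {d : measure_display} {T : measurableType d} {R : realType}.
Variable X : nat -> T -> R.

Lemma vecX_meas i : measurable_fun (setT : set (Tf X i)) (vecX X i).
Proof.
apply/measurable_fun_tnthP => j.
have -> : ((fun t : i.-tuple R => tnth t j) \o vecX X i) = X j.+1.
  by apply/funext => w; rewrite /comp /vecX tnth_mktuple.
exact: Gen_meas (ltn_ord j).
Qed.

Lemma vecX0_meas i : measurable_fun (setT : set (Tf X i.-1)) (vecX0 X i).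
Proof.
apply/measurable_fun_tnthP => j.
have -> : ((fun t : i.-tuple R => tnth t j) \o vecX0 X i) =
    (fun w => if val j == i.-1 then 0 else X j.+1 w).
  by apply/funext => w; rewrite /comp /vecX0 tnth_mktuple.
case: eqP => h; first exact: measurable_cst.
apply: Gen_meas; have := ltn_ord j; case: i j h => //= i j h.
by rewrite ltnS leq_eqVlt => /orP[/eqP|].
Qed.

End vec.

Section part3.
Context {d : measure_display} {T : measurableType d} {R : realType}.
Variable P : probability T R.
Local Notation RI B f := (Rintegral P B f).
Variables (X : nat -> T -> R) (n : nat) (U V : nat -> T -> R).
Hypothesis mX : forall i, (1 <= i <= n)%N -> measurable_fun setT (X i).
Hypothesis IX : forall i, (1 <= i <= n)%N -> P.-integrable setT (EFin \o X i).
Hypothesis HU : forall i, (1 <= i <= n)%N ->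
  is_cond_exp P (Fsig X i) (tailsum X i n) (U i).
Hypothesis HV : forall i, (1 <= i <= n)%N ->
  is_cond_exp P (Fsig X i.-1) (tailsum X i n) (V i).
Variables (L delta K A : R) (N : nat).
Hypothesis hL : 0 <= L.
Hypothesis hN : (0 < N)%N.
Hypothesis hd : 0 < delta.
Hypothesis hK : 0 < K.
Hypothesis hA : 1 + n%:R * (L / N%:R) <= A.
Hypothesis Hh : forall i l, (1 <= i)%N -> (i < l <= n)%N ->
     exists h : i.-tuple R -> R,
       [/\ measurable_fun setT h,
           is_cond_exp P (Fsig X i) (X l) (fun w => h (vecX X i w)) &
           {ae P, forall w,
              `|h (vecX X i w) - h (vecX0 X i w)| <= L * `|X i w| / N%:R}].
Hypothesis HY : forall i, (1 <= i <= n)%N ->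
     exists Y : T -> R,
       is_cond_exp P (Fsig X i.-1) (fun w => expR (delta * A * `|X i w|)) Y /\
       {ae P, forall w, Y w <= K}.

Lemma part3 i : (1 <= i <= n)%N ->
  P.-integrable setT (EFin \o (fun w => expR (delta * `|U i w - V i w|))) /\
  forall Y : T -> R,
    is_cond_exp P (Fsig X i.-1) (fun w => expR (delta * `|U i w - V i w|)) Y ->
    {ae P, forall w, Y w <= K ^+ 2}.
Proof.
move=> /[dup] iH /andP[i1 i_n].
have mXi := mXle mX i_n.
have mXp := mXle mX (leq_trans (leq_pred i) i_n).
have H1 : forall l, exists h : i.-tuple R -> R, measurable_fun setT h /\
    ((i < l <= n)%N ->
     is_cond_exp P (Fsig X i) (X l) (fun w => h (vecX X i w)) /\
     {ae P, forall w, `|h (vecX X i w) - h (vecX0 X i w)| <= L * `|X i w| / N%:R}).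
  move=> l; case: (boolP (i < l <= n)%N) => hl.
    by have [h [mh ce ae]] := Hh i1 hl; exists h.
  by exists (fun _ => 0); split => //; exact: measurable_cst.
have [hh Hhh] := choice H1.
pose Hs w := \sum_(i.+1 <= l < n.+1) hh l (vecX X i w).
pose H0 w := \sum_(i.+1 <= l < n.+1) hh l (vecX0 X i w).
pose G w := A * `|X i w|.
pose Z w := X i w + (Hs w - H0 w).
pose W w := V i w - H0 w.
have [mU IU It HUi] := HU iH.
have [mV IV _ HVi] := HV iH.
have IXi := IX iH.
have inr l : (i.+1 <= l < n.+1)%N -> (i < l <= n)%N by [].
have mhv l : measurable_fun (setT : set (Tf X i)) (fun w => hh l (vecX X i w)).
  by apply: measurableT_comp; [exact: (Hhh l).1|exact: vecX_meas].
have mh0 l : measurable_fun (setT : set (Tf X i.-1)) (fun w => hh l (vecX0 X i w)).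
  by apply: measurableT_comp; [exact: (Hhh l).1|exact: vecX0_meas].
have Ihv l : (i < l <= n)%N -> P.-integrable setT (EFin \o (fun w => hh l (vecX X i w))).
  by move=> hl; have [[_ ? _ _] _] := (Hhh l).2 hl.
have Ih0 l : (i < l <= n)%N -> P.-integrable setT (EFin \o (fun w => hh l (vecX0 X i w))).
  move=> hl; have [_ hae] := (Hhh l).2 hl.
  apply: (ae_integrable (g := fun w => `|hh l (vecX X i w)| + L / N%:R * `|X i w|)).
  - exact: Tf_meas mXp (mh0 l).
  - apply: filterS hae => w hw.
    rewrite -[X in `|X|](subKr (hh l (vecX X i w))) (le_trans (ler_normB _ _)) //.
    by rewrite lerD2l mulrAC.
  - apply: intD => //; first exact: integrable_norm (Ihv l hl).
    by apply: intZ => //; exact: integrable_norm.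
have IHs : P.-integrable setT (EFin \o Hs).
  by apply: intS => // l hl; apply: Ihv; exact: inr.
have IH0 : P.-integrable setT (EFin \o H0).
  by apply: intS => // l hl; apply: Ih0; exact: inr.
have mHs : measurable_fun (setT : set (Tf X i)) Hs by exact: measurable_sum.
have mH0 : measurable_fun (setT : set (Tf X i.-1)) H0 by exact: measurable_sum.
have tsE w : tailsum X i n w = X i w + \sum_(i.+1 <= l < n.+1) X l w.
  by rewrite /tailsum big_ltn.
have RIX B : Fsig X i B ->
    RI B (fun w => \sum_(i.+1 <= l < n.+1) X l w) = RI B Hs.
  move=> FB; have mB : measurable B by exact: Fsub mXi _ FB.
  rewrite /Hs !RIS //; last 2 first.
  - by move=> l hl; apply: integrableS (Ihv l (inr l hl)).
  - by move=> l hl; apply: integrableS (IX _) => //; case/andP: (inr l hl) => il ->; rewrite (leq_trans i1 (ltnW il)).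
  apply: eq_big_nat => l hl; have [[_ _ _ Hl] _] := (Hhh l).2 (inr l hl).
  by rewrite /Rintegral Hl.
have ha : {ae P, forall w, U i w = X i w + Hs w}.
  apply: (eq_ce (i := i) mXi).
  - exact/FmP.
  - by apply: measurable_funD => //; exact: X_meas.
  - exact: IU.
  - exact: intD.
  move=> B FB; have mB : measurable B by exact: Fsub mXi _ FB.
  rewrite HUi // (RIE mB (intD mB _ _)); [|exact: integrableS IXi|exact: integrableS IHs].
  rewrite (RIE mB (integrableS _ _ _ It)) //; congr EFin.
  rewrite (@eq_Rintegral _ _ _ P B (fun w => X i w + \sum_(i.+1 <= l < n.+1) X l w)); last by move=> w _; rewrite big_ltn.
  rewrite !RintegralD //; [by rewrite RIX|exact: integrableS IXi|exact: integrableS IHs|exact: integrableS IXi|].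
  apply: (@integrableS _ _ _ _ setT) => //; apply: intS => // l hl; apply: IX.
  by case/andP: (inr l hl) => il ->; rewrite (leq_trans i1 (ltnW il)).
have hbound := ae_big (Q := fun l w => `|hh l (vecX X i w) - hh l (vecX0 X i w)| <= L * `|X i w| / N%:R)
  (a := i.+1) (b := n.+1) (fun l hl => ((Hhh l).2 (inr l hl)).2).
have LN0 : 0 <= L / N%:R by rewrite divr_ge0.
have hb : {ae P, forall w, `|Z w| <= G w}.
  apply: filterS hbound => w hw.
  have h1 : `|Hs w - H0 w| <= n%:R * (L / N%:R) * `|X i w|.
    rewrite /Hs /H0 -sumrB (le_trans (ler_norm_sum _ _ _)) //.
    apply: le_trans (ler_sum_nat hw) _.
    rewrite sumr_const_nat subSS -(mulr_natl (L * `|X i w| / N%:R) (n - i)).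
    have -> : (n - i)%:R * (L * `|X i w| / N%:R) = (n - i)%:R * (L / N%:R) * `|X i w| by ring.
    apply: ler_wpM2r => //; apply: ler_wpM2r => //.
    by rewrite ler_nat leq_subr.
  rewrite /Z /G (le_trans (ler_normD _ _)) //.
  apply: le_trans (lerD (lexx _) h1) _.
  by rewrite -{1}(mul1r `|X i w|) -mulrDl; apply: ler_wpM2r.
have hc : forall B, Fsig X i.-1 B -> RI B W = RI B Z.
  move=> B FBp; have FB : Fsig X i B by exact: Fmono (leq_pred i) _ FBp.
  have mB : measurable B by exact: Fsub mXi _ FB.
  have IS f : P.-integrable setT (EFin \o f) -> P.-integrable B (EFin \o f).
    by move=> If; apply: integrableS If.
  have ISX : P.-integrable B (EFin \o (fun w => \sum_(i.+1 <= l < n.+1) X l w)).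
    apply: IS; apply: intS => // l hl; apply: IX.
    by case/andP: (inr l hl) => il ->; rewrite (leq_trans i1 (ltnW il)).
  rewrite /W /Z RintegralB //; try exact: IS.
  rewrite [RHS]RintegralD //; [|exact: IS|by apply: IS; apply: intB].
  rewrite [X in _ = _ + X]RintegralB //; try exact: IS.
  have -> : RI B (V i) = RI B (tailsum X i n) by rewrite /Rintegral HVi.
  rewrite (@eq_Rintegral _ _ _ P B (fun w => X i w + \sum_(i.+1 <= l < n.+1) X l w)); last by move=> w _; rewrite /tailsum big_ltn.
  rewrite RintegralD ?RIX //; try exact: IS.
  by rewrite addrA.
have [Y0 [[mY0 IY0 IE0 HY0] hY0]] := HY iH.
have IE : P.-integrable setT (EFin \o (fun x => expR (delta * G x))).
  by apply: (eq_integrable _ _ _ _ IE0) => // x _ /=; rewrite /G mulrA.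
have hYE : forall B, Fsig X i.-1 B -> RI B Y0 = RI B (fun x => expR (delta * G x)).
  move=> B FB; rewrite /Rintegral HY0 //; congr fine.
  by apply: eq_integral => x _; rewrite /G mulrA.
have he : {ae P, forall x, expR (delta * `|W x|) <= K}.
  apply: (@two_side _ _ _ P X i.-1 W Z G Y0 delta K) => //.
  - by apply: measurable_funB => //; exact/FmP.
  - exact: intB.
  - by apply: intD => //; exact: intB.
have hg : {ae P, forall x, expR (delta * `|U i x - V i x|) <= K * expR (delta * G x)}.
  have hbe : {ae P, forall x, `|Z x| <= G x /\ expR (delta * `|W x|) <= K}.
    by apply: filterS2 hb he => x a b; split.
  apply: filterS2 ha hbe => x hUx [hZx hWx].
  have -> : U i x - V i x = Z x - W x by rewrite hUx /Z /W; ring.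
  rewrite [leRHS]mulrC; apply: le_trans (ler_wpM2l (ltW (expR_gt0 _)) hWx).
  rewrite -expRD ler_expR -mulrDr ler_pM2l //.
  by rewrite (le_trans (ler_normB _ _)) // lerD2r.
have mU' : measurable_fun setT (U i) by exact: Tf_meas mXi (proj1 (FmP _ _ _) mU).
have mV' : measurable_fun setT (V i) by exact: Tf_meas mXp (proj1 (FmP _ _ _) mV).
have mD : measurable_fun setT (fun w => expR (delta * `|U i w - V i w|)).
  apply: measurableT_comp; first exact: measurable_expR.
  apply: measurable_funM; first exact: measurable_cst.
  apply: measurableT_comp; first exact: normr_measurable.
  exact: measurable_funB.
have IK : P.-integrable setT (EFin \o (fun x => K * expR (delta * G x))) by exact: intZ.
have ID : P.-integrable setT (EFin \o (fun w => expR (delta * `|U i w - V i w|))).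
  apply: (ae_integrable mD _ IK); apply: filterS hg => x hx.
  by rewrite ger0_norm // ltW // expR_gt0.
split => // Y' [mY' IY' _ HY'].
apply: (le_ce (i := i.-1) mXp).
- exact/FmP.
- exact: measurable_cst.
- exact: IY'.
- exact: intC.
move=> B FB; have mB : measurable B by exact: Fsub mXp _ FB.
have IS f : P.-integrable setT (EFin \o f) -> P.-integrable B (EFin \o f).
  by move=> If; apply: integrableS If.
have -> : RI B Y' = RI B (fun w => expR (delta * `|U i w - V i w|)) by rewrite /Rintegral HY'.
apply: le_trans (ae_le_RI mB (IS _ ID) (IS _ IK) hg) _.
rewrite RintegralZl //; last exact: IS.
rewrite -hYE // Rintegral_cst // expr2 -mulrA.
apply: ler_wpM2l; first exact: ltW.
rewrite -Rintegral_cst //; apply: ae_le_RI => //; [exact: IS|exact: intC].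
Qed.

End part3.
Theorem mainTheorem3 (d : measure_display) (T : measurableType d)
  (R : realType) (P : probability T R) (X : nat -> T -> R)
  (n N M : nat) (L delta K : R) :
  (forall i, (1 <= i <= n)%N -> measurable_fun setT (X i)) ->
  (forall i, (1 <= i <= n)%N -> P.-integrable setT (EFin \o X i)) ->
  (0 < N)%N -> (0 < M)%N -> (n <= M)%N ->
  0 <= L -> 0 < delta -> 0 < K ->
  let A := 1 + L * M%:R / N%:R in
  (forall i l, (1 <= i)%N -> (i < l <= n)%N ->
     exists h : i.-tuple R -> R,
       [/\ measurable_fun setT h,
           is_cond_exp P (Fsig X i) (X l) (fun w => h (vecX X i w)) &
           {ae P, forall w,
              `|h (vecX X i w) - h (vecX0 X i w)| <= L * `|X i w| / N%:R}]) ->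
  (forall i, (1 <= i <= n)%N ->
     exists Y : T -> R,
       is_cond_exp P (Fsig X i.-1) (fun w => expR (delta * A * `|X i w|)) Y /\
       {ae P, forall w, Y w <= K}) ->
  forall U V : nat -> T -> R,
  (forall i, (1 <= i <= n)%N -> is_cond_exp P (Fsig X i) (tailsum X i n) (U i)) ->
  (forall i, (1 <= i <= n)%N -> is_cond_exp P (Fsig X i.-1) (tailsum X i n) (V i)) ->
  let dd := fun i w => U i w - V i w in
  [/\ (forall i, (1 <= i <= n)%N -> is_cond_exp P (Fsig X i.-1) (dd i) (fun _ => 0)),
      {ae P, forall w, \sum_(1 <= i < n.+1) X i w
                         - fine ('E_P[fun x => \sum_(1 <= i < n.+1) X i x])
                       = \sum_(1 <= i < n.+1) dd i w} &
      (forall i, (1 <= i <= n)%N ->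
         P.-integrable setT (EFin \o (fun w => expR (delta * `|dd i w|))) /\
         forall Y : T -> R,
           is_cond_exp P (Fsig X i.-1) (fun w => expR (delta * `|dd i w|)) Y ->
           {ae P, forall w, Y w <= K ^+ 2})].
Proof.
move=> mX IX N0 M0 nM L0 d0 K0 A Hh HY U V HU HV dd.
split.
- by move=> i iH; exact: (part1 mX HU HV iH).
- exact: (part2 mX IX HU HV).
- move=> i iH; apply: (part3 mX IX HU HV L0 d0 K0 _ Hh HY iH).
  rewrite /A lerD2l.
  have -> : n%:R * (L / N%:R) = L * n%:R / N%:R by ring.
  apply: ler_wpM2r; first by rewrite invr_ge0.
  by apply: ler_wpM2l => //; rewrite ler_nat.
Qed.
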